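(* Let $d\ge 1$ and $1\le p<q<\infty$. Then the discrete Morrey space $\ell^p_q(\mathbb{Z}^d)$ satisfies $$C_{\rm NJ}(\ell^p_q)=C_{\rm J}(\ell^p_q)=2\quad\text{and}\quad C_{\rm DW}(\ell^p_q)=4.$$
   Context: Let $\omega:=\mathbb{N}\cup\{0\}$. For $m\in\mathbb{Z}^d$ and $N\in\omega$ let $S_{m,N}:=\{k\in\mathbb{Z}^d:\|k-m\|_\infty\le N\}$, where $\|(k_1,\dots,k_d)\|_\infty=\max_i|k_i|$; its cardinality is $|S_{m,N}|=(2N+1)^d$. For $1\le p\le q<\infty$, the discrete Morrey space $\ell^p_q=\ell^p_q(\mathbb{Z}^d)$ is the Banach space of all functions $x:\mathbb{Z}^d\to\mathbb{R}$ with $$\|x\|_{\ell^p_q}:=\sup_{m\in\mathbb{Z}^d,\,N\in\omega}|S_{m,N}|^{\frac1q-\frac1p}\Big(\sum_{k\in S_{m,N}}|x(k)|^p\Big)^{1/p}<\infty.$$ For a Banach space $X$: the von Neumann–Jordan constant is $C_{\rm NJ}(X):=\sup\Big\{\frac{\|x+y\|_X^2+\|x-y\|_X^2}{2(\|x\|_X^2+\|y\|_X^2)}: x,y\in X\setminus\{0\}\Big\}$; the James constant is $C_{\rm J}(X):=\sup\{\min\{\|x+y\|_X,\|x-y\|_X\}: x,y\in X,\ \|x\|_X=\|y\|_X=1\}$; the Dunkl–Williams constant is $C_{\rm DW}(X):=\sup\Big\{\frac{\|x\|_X+\|y\|_X}{\|x-y\|_X}\Big\|\frac{x}{\|x\|_X}-\frac{y}{\|y\|_X}\Big\|_X: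 x,y\in X,\ x\neq0,\ y\neq0,\ x\neq y\Big\}$. *)

(* Defs.v *)
From Stdlib Require Import Reals List ZArith Classical ClassicalEpsilon.
Import ListNotations.
Open Scope R_scope.

Definition Zd (d : nat) : Type := { l : list Z | length l = d }.

Fixpoint pad (d : nat) (l : list Z) : list Z :=
  match d with
  | O => []
  | S d' => hd 0%Z l :: pad d' (tl l)
  end.

Lemma pad_length (d : nat) (l : list Z) : length (pad d l) = d.
Proof. revert l; induction d as [|d IH]; intro l; simpl; [reflexivity | now rewrite IH]. Qed.

Definition to_Zd (d : nat) (l : list Z) : Zd d := exist _ (pad d l) (pad_length d l).

(* Enumeration of the cube S_{m,N} = {k : ||k - m||_inf <= N} (without repetitions). *)
Fixpoint cube (m : list Z) (N : nat) : list (list Z) :=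
  match m with
  | [] => [ [] ]
  | a :: m' =>
      flat_map (fun j => map (cons j) (cube m' N))
               (map (fun i => (a - Z.of_nat N + Z.of_nat i)%Z) (seq 0 (2 * N + 1)))
  end.

(* Real power a^b for a >= 0 (with 0^b = 0, used only for b > 0). *)
Definition rpow (a b : R) : R := if Rlt_dec 0 a then Rpower a b else 0.

Definition morrey_term (d : nat) (p q : R) (x : Zd d -> R) (m : Zd d) (N : nat) : R :=
  Rpower (INR ((2 * N + 1) ^ d)) (1 / q - 1 / p) *
  rpow (fold_right Rplus 0
          (map (fun k => rpow (Rabs (x (to_Zd d k))) p) (cube (proj1_sig m) N)))
       (1 / p).

Definition morrey_set (d : nat) (p q : R) (x : Zd d -> R) (r : R) : Prop :=
  exists (m : Zd d) (N : nat), r = morrey_term d p q x m N.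

Definition in_morrey (d : nat) (p q : R) (x : Zd d -> R) : Prop :=
  exists M, forall (m : Zd d) (N : nat), morrey_term d p q x m N <= M.

Definition Rsup (E : R -> Prop) : R :=
  epsilon (inhabits 0) (fun s => is_lub E s).

Definition morrey_norm (d : nat) (p q : R) (x : Zd d -> R) : R :=
  Rsup (morrey_set d p q x).

Definition fadd {d} (x y : Zd d -> R) : Zd d -> R := fun k => x k + y k.
Definition fsub {d} (x y : Zd d -> R) : Zd d -> R := fun k => x k - y k.
Definition fscal {d} (c : R) (x : Zd d -> R) : Zd d -> R := fun k => c * x k.
Definition fzero {d} : Zd d -> R := fun _ => 0.

(* Sets whose suprema are the von Neumann-Jordan, James and Dunkl-Williams constants. *)
Definition NJ_set (d : nat) (p q : R) (r : R) : Prop :=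
  exists x y : Zd d -> R,
    in_morrey d p q x /\ in_morrey d p q y /\ x <> fzero /\ y <> fzero /\
    r = (morrey_norm d p q (fadd x y) ^ 2 + morrey_norm d p q (fsub x y) ^ 2)
        / (2 * (morrey_norm d p q x ^ 2 + morrey_norm d p q y ^ 2)).

Definition J_set (d : nat) (p q : R) (r : R) : Prop :=
  exists x y : Zd d -> R,
    in_morrey d p q x /\ in_morrey d p q y /\
    morrey_norm d p q x = 1 /\ morrey_norm d p q y = 1 /\
    r = Rmin (morrey_norm d p q (fadd x y)) (morrey_norm d p q (fsub x y)).

Definition DW_set (d : nat) (p q : R) (r : R) : Prop :=
  exists x y : Zd d -> R,
    in_morrey d p q x /\ in_morrey d p q y /\ x <> fzero /\ y <> fzero /\ x <> y /\
    r = (morrey_norm d p q x + morrey_norm d p q y) / morrey_norm d p q (fsub x y) *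
        morrey_norm d p q (fsub (fscal (/ morrey_norm d p q x) x)
                                (fscal (/ morrey_norm d p q y) y)).

(* Main.v *)
Require Import Defs.
From Stdlib Require Import Reals Lra Lia Psatz ZArith List Classical ClassicalEpsilon FunctionalExtensionality.
Import ListNotations.
Open Scope R_scope.

Lemma rpow_pos a b : 0 < a -> rpow a b = Rpower a b.
Proof. intro H; unfold rpow; destruct (Rlt_dec 0 a); [reflexivity|lra]. Qed.
Lemma rpow_zero b : rpow 0 b = 0.
Proof. unfold rpow; destruct (Rlt_dec 0 0); [lra|reflexivity]. Qed.
Lemma rpow_nonneg a b : 0 <= rpow a b.
Proof. unfold rpow; destruct (Rlt_dec 0 a); [unfold Rpower; left; apply exp_pos|lra]. Qed.
Lemma rpow_gt0 a b : 0 < a -> 0 < rpow a b.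
Proof. intro H; rewrite rpow_pos by exact H; unfold Rpower; apply exp_pos. Qed.
Lemma rpow_mul a b c : 0 <= a -> 0 <= b -> rpow (a*b) c = rpow a c * rpow b c.
Proof.
  intros Ha Hb. destruct Ha as [Ha|Ha]; [|subst; rewrite Rmult_0_l, !rpow_zero; ring].
  destruct Hb as [Hb|Hb]; [|subst; rewrite Rmult_0_r, !rpow_zero; ring].
  rewrite !rpow_pos by nra. now rewrite Rpower_mult_distr.
Qed.
Lemma rpow_inv a c : 0 < a -> rpow (/a) c = / rpow a c.
Proof.
  intro H. rewrite !rpow_pos; [|exact H|apply Rinv_0_lt_compat, H].
  unfold Rpower. rewrite ln_Rinv by exact H. rewrite <- exp_Ropp. f_equal; ring.
Qed.
Lemma rpow_rpow a b c : 0 <= a -> rpow (rpow a b) c = rpow a (b*c).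
Proof.
  intro Ha; destruct Ha as [Ha|Ha]; [|subst; rewrite !rpow_zero; reflexivity].
  rewrite (rpow_pos a b Ha). rewrite rpow_pos by (unfold Rpower; apply exp_pos).
  rewrite rpow_pos by exact Ha. apply Rpower_mult.
Qed.
Lemma rpow_1 a : 0 <= a -> rpow a 1 = a.
Proof. intro Ha; destruct Ha as [Ha|Ha]; [rewrite rpow_pos by exact Ha; now apply Rpower_1|subst; apply rpow_zero]. Qed.
Lemma rpow_inv_p a p : 0 <= a -> 0 < p -> rpow (rpow a p) (1/p) = a.
Proof. intros Ha Hp. rewrite rpow_rpow by exact Ha. replace (p * (1/p)) with 1 by (field; lra). now apply rpow_1. Qed.
Lemma rpow_inv_p' a p : 0 <= a -> 0 < p -> rpow (rpow a (1/p)) p = a.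
Proof. intros Ha Hp. rewrite rpow_rpow by exact Ha. replace (1/p * p) with 1 by (field; lra). now apply rpow_1. Qed.
Lemma rpow_le a b c : 0 <= a <= b -> 0 <= c -> rpow a c <= rpow b c.
Proof.
  intros [Ha Hab] Hc. destruct Ha as [Ha|Ha]; [|subst; rewrite rpow_zero; apply rpow_nonneg].
  rewrite !rpow_pos by lra. apply Rle_Rpower_l; lra.
Qed.
Lemma rpow_lt a b c : 0 <= a < b -> 0 < c -> rpow a c < rpow b c.
Proof.
  intros [Ha Hab] Hc. destruct Ha as [Ha|Ha]; [|subst; rewrite rpow_zero; apply rpow_gt0; lra].
  rewrite !rpow_pos by lra. apply Rlt_Rpower_l; lra.
Qed.
Lemma rpow_eq0 a c : 0 <= a -> rpow a c = 0 -> a = 0.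
Proof. intros Ha H. destruct Ha as [Ha|Ha]; [|auto]. pose proof (rpow_gt0 a c Ha); lra. Qed.

Lemma tangent u m p : 0 <= u -> 0 < m -> 1 <= p ->
  rpow m p + p * Rpower m (p-1) * (u - m) <= rpow u p.
Proof.
  intros Hu Hm Hp. rewrite (rpow_pos m) by exact Hm.
  assert (Hmp : Rpower m (p-1) * m = Rpower m p).
  { replace p with ((p-1)+1) at 2 by ring. rewrite Rpower_plus, Rpower_1 by exact Hm. reflexivity. }
  destruct Hu as [Hu|Hu].
  - rewrite rpow_pos by exact Hu.
    destruct (Rtotal_order u m) as [Hlt|[Heq|Hgt]].
    + destruct (MVT_cor2 (fun x => Rpower x p) (fun x => p * Rpower x (p-1)) u m Hlt) as [c [Hc1 Hc2]].
      { intros c Hc. apply derivable_pt_lim_power; lra. }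
      assert (Rpower c (p-1) <= Rpower m (p-1)) by (apply Rle_Rpower_l; lra).
      cbv beta in Hc1. assert (0 <= p * (Rpower m (p-1) - Rpower c (p-1)) * (m - u)).
      { apply Rmult_le_pos; [apply Rmult_le_pos|]; lra. } nra.
    + subst. lra.
    + destruct (MVT_cor2 (fun x => Rpower x p) (fun x => p * Rpower x (p-1)) m u Hgt) as [c [Hc1 Hc2]].
      { intros c Hc. apply derivable_pt_lim_power; lra. }
      assert (Rpower m (p-1) <= Rpower c (p-1)) by (apply Rle_Rpower_l; lra).
      cbv beta in Hc1. assert (0 <= p * (Rpower c (p-1) - Rpower m (p-1)) * (u - m)).
      { apply Rmult_le_pos; [apply Rmult_le_pos|]; lra. } nra.
  - subst. rewrite rpow_zero.
    replace (Rpower m p + p * Rpower m (p - 1) * (0 - m)) with ((1-p)*Rpower m p) by (rewrite <- Hmp; ring).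
    assert (0 < Rpower m p) by (unfold Rpower; apply exp_pos). nra.
Qed.

Lemma rpow_convex l s t p : 0 <= l <= 1 -> 0 <= s -> 0 <= t -> 1 <= p ->
  rpow (l*s + (1-l)*t) p <= l * rpow s p + (1-l) * rpow t p.
Proof.
  intros Hl Hs Ht Hp.
  assert (Hz : 0 <= l*s + (1-l)*t) by nra.
  destruct Hz as [Hz|Hz].
  - pose proof (tangent s _ p Hs Hz Hp). pose proof (tangent t _ p Ht Hz Hp).
    set (z := l*s+(1-l)*t) in *. set (K := p * Rpower z (p-1)) in *.
    assert (l * (rpow z p + K*(s-z)) + (1-l)*(rpow z p + K*(t-z)) = rpow z p) by (unfold z; ring).
    nra.
  - rewrite <- Hz, rpow_zero. pose proof (rpow_nonneg s p); pose proof (rpow_nonneg t p); nra.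
Qed.
Definition sumL {K : Type} (F : K -> R) (c : list K) : R := fold_right Rplus 0 (map F c).

Lemma sumL_le {K} (F G : K -> R) c : (forall k, In k c -> F k <= G k) -> sumL F c <= sumL G c.
Proof. induction c as [|a c IH]; intro H; unfold sumL in *; simpl; [lra|].
  pose proof (H a (or_introl eq_refl)). assert (fold_right Rplus 0 (map F c) <= fold_right Rplus 0 (map G c)) by (apply IH; intros; apply H; right; auto). lra. Qed.
Lemma sumL_nonneg {K} (F : K -> R) c : (forall k, 0 <= F k) -> 0 <= sumL F c.
Proof. intro H; induction c as [|a c IH]; unfold sumL in *; simpl; [lra|]. pose proof (H a); lra. Qed.
Lemma sumL_lin {K} (F G : K -> R) a b c : sumL (fun k => a * F k + b * G k) c = a * sumL F c + b * sumL G c.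
Proof. induction c as [|x c IH]; unfold sumL in *; simpl; [ring|]. rewrite IH; ring. Qed.
Lemma sumL_ext_in {K} (F G : K -> R) c : (forall k, In k c -> F k = G k) -> sumL F c = sumL G c.
Proof. intro H; apply Rle_antisym; apply sumL_le; intros k Hk; rewrite (H k Hk); lra. Qed.
Lemma sumL_term_le {K} (F : K -> R) c k : (forall x, 0 <= F x) -> In k c -> F k <= sumL F c.
Proof. intros H; induction c as [|a c IH]; intro Hk; [destruct Hk|]. unfold sumL in *; simpl.
  destruct Hk as [<-|Hk]. - pose proof (sumL_nonneg F c H); unfold sumL in *; lra.
  - pose proof (IH Hk); pose proof (H a); lra. Qed.

Lemma mink_zero {K} (c : list K) f g p : 1 <= p -> (forall k, 0 <= f k) -> (forall k, 0 <= g k) ->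
  rpow (sumL (fun k => rpow (f k) p) c) (1/p) = 0 ->
  rpow (sumL (fun k => rpow (f k + g k) p) c) (1/p) <=
  rpow (sumL (fun k => rpow (f k) p) c) (1/p) + rpow (sumL (fun k => rpow (g k) p) c) (1/p).
Proof.
  intros Hp Hf Hg HA. rewrite HA, Rplus_0_l.
  apply rpow_eq0 in HA; [|apply sumL_nonneg; intro; apply rpow_nonneg].
  rewrite (sumL_ext_in (fun k => rpow (f k + g k) p) (fun k => rpow (g k) p)); [lra|].
  intros k Hk. assert (f k = 0).
  { apply (rpow_eq0 _ p); [apply Hf|]. pose proof (sumL_term_le (fun k => rpow (f k) p) c k (fun x => rpow_nonneg _ _) Hk).
    pose proof (rpow_nonneg (f k) p). simpl in *; lra. }
  rewrite H, Rplus_0_l; reflexivity.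
Qed.

Lemma mink {K} (c : list K) f g p : 1 <= p -> (forall k, 0 <= f k) -> (forall k, 0 <= g k) ->
  rpow (sumL (fun k => rpow (f k + g k) p) c) (1/p) <=
  rpow (sumL (fun k => rpow (f k) p) c) (1/p) + rpow (sumL (fun k => rpow (g k) p) c) (1/p).
Proof.
  intros Hp Hf Hg.
  set (SA := sumL (fun k => rpow (f k) p) c). set (SB := sumL (fun k => rpow (g k) p) c).
  set (A := rpow SA (1/p)). set (B := rpow SB (1/p)).
  assert (HSA : 0 <= SA) by (apply sumL_nonneg; intro; apply rpow_nonneg).
  assert (HSB : 0 <= SB) by (apply sumL_nonneg; intro; apply rpow_nonneg).
  assert (HA : 0 <= A) by apply rpow_nonneg. assert (HB : 0 <= B) by apply rpow_nonneg.
  destruct HA as [HA|HA]; [|apply mink_zero; auto].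
  destruct HB as [HB|HB].
  2:{ rewrite Rplus_comm. rewrite (sumL_ext_in _ (fun k => rpow (g k + f k) p)) by (intros; rewrite Rplus_comm; reflexivity).
      apply mink_zero; auto. }
  assert (EA : rpow A p = SA) by (apply rpow_inv_p'; lra).
  assert (EB : rpow B p = SB) by (apply rpow_inv_p'; lra).
  assert (SApos : 0 < SA) by (rewrite <- EA; apply rpow_gt0; lra).
  assert (SBpos : 0 < SB) by (rewrite <- EB; apply rpow_gt0; lra).
  set (lam := A / (A+B)). set (C := rpow (A+B) p).
  assert (Hlam : 0 <= lam <= 1).
  { unfold lam; split; [apply Rle_mult_inv_pos; lra|].
    apply (Rmult_le_reg_r (A+B)); [lra|]. unfold Rdiv; rewrite Rmult_assoc, Rinv_l; lra. }
  assert (Hpt : forall k, rpow (f k + g k) p <= (C*lam/SA) * rpow (f k) p + (C*(1-lam)/SB) * rpow (g k) p).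
  { intro k.
    replace (f k + g k) with ((A+B) * (lam * (f k / A) + (1-lam) * (g k / B))) by (unfold lam; field; lra).
    rewrite rpow_mul; [|lra|].
    2:{ assert (0 <= lam <= 1) by exact Hlam.
        pose proof (Hf k); pose proof (Hg k). assert (0 <= f k / A) by (apply Rle_mult_inv_pos; lra).
        assert (0 <= g k / B) by (apply Rle_mult_inv_pos; lra). nra. }
    assert (0 <= lam <= 1) by exact Hlam.
    pose proof (rpow_convex lam (f k / A) (g k / B) p H).
    assert (Hfa : rpow (f k / A) p = rpow (f k) p / SA).
    { unfold Rdiv. rewrite rpow_mul, rpow_inv, EA; [reflexivity|lra|apply Hf|left; apply Rinv_0_lt_compat; lra]. }
    assert (Hgb : rpow (g k / B) p = rpow (g k) p / SB).
    { unfold Rdiv. rewrite rpow_mul, rpow_inv, EB; [reflexivity|lra|apply Hg|left; apply Rinv_0_lt_compat; lra]. }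
    rewrite Hfa, Hgb in H0.
    assert (HC : 0 <= C) by apply rpow_nonneg.
    assert (H1 : 0 <= f k / A) by (apply Rle_mult_inv_pos; [apply Hf|lra]).
    assert (H2 : 0 <= g k / B) by (apply Rle_mult_inv_pos; [apply Hg|lra]).
    specialize (H0 H1 H2 Hp).
    apply Rle_trans with (C * (lam * (rpow (f k) p / SA) + (1 - lam) * (rpow (g k) p / SB))).
    - apply Rmult_le_compat_l; assumption.
    - right; field; lra. }
  pose proof (sumL_le _ _ c (fun k _ => Hpt k)) as Hs. rewrite sumL_lin in Hs.
  fold SA SB in Hs.
  replace (C * lam / SA * SA + C * (1 - lam) / SB * SB) with C in Hs by (field; lra).
  apply Rle_trans with (rpow C (1/p)).
  - apply rpow_le; [split; [apply sumL_nonneg; intro; apply rpow_nonneg|exact Hs]|].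
    apply Rlt_le, Rdiv_lt_0_compat; lra.
  - right. unfold C. apply rpow_inv_p; lra.
Qed.
Definition W (d : nat) (p q : R) (N : nat) : R := Rpower (INR ((2 * N + 1) ^ d)) (1 / q - 1 / p).
Definition T (d : nat) (p q : R) (f : list Z -> R) (m : Zd d) (N : nat) : R :=
  W d p q N * rpow (sumL (fun k => rpow (f k) p) (cube (proj1_sig m) N)) (1/p).

Lemma term_T d p q x m N : morrey_term d p q x m N = T d p q (fun k => Rabs (x (to_Zd d k))) m N.
Proof. reflexivity. Qed.

Lemma W_pos d p q N : 0 < W d p q N.
Proof. unfold W, Rpower; apply exp_pos. Qed.

Lemma T_nonneg d p q f m N : 0 <= T d p q f m N.
Proof. unfold T. pose proof (W_pos d p q N). pose proof (rpow_nonneg (sumL (fun k => rpow (f k) p) (cube (proj1_sig m) N)) (1/p)). nra. Qed.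

Lemma T_mono d p q f g m N : 1 <= p -> (forall k, 0 <= f k <= g k) -> T d p q f m N <= T d p q g m N.
Proof.
  intros Hp H. unfold T. apply Rmult_le_compat_l; [left; apply W_pos|].
  apply rpow_le; [split; [apply sumL_nonneg; intro; apply rpow_nonneg|]|apply Rlt_le, Rdiv_lt_0_compat; lra].
  apply sumL_le; intros k _. apply rpow_le; [apply H|lra].
Qed.

Lemma T_scal d p q f a m N : 1 <= p -> 0 <= a -> (forall k, 0 <= f k) ->
  T d p q (fun k => a * f k) m N = a * T d p q f m N.
Proof.
  intros Hp Ha Hf. unfold T.
  rewrite (sumL_ext_in _ (fun k => rpow a p * rpow (f k) p + 0 * rpow (f k) p)).
  2:{ intros k _. rewrite rpow_mul by auto. ring. }
  rewrite sumL_lin, Rmult_0_l, Rplus_0_r.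
  rewrite rpow_mul; [|apply rpow_nonneg|apply sumL_nonneg; intro; apply rpow_nonneg].
  rewrite rpow_inv_p by lra. ring.
Qed.

Lemma T_add d p q f g m N : 1 <= p -> (forall k, 0 <= f k) -> (forall k, 0 <= g k) ->
  T d p q (fun k => f k + g k) m N <= T d p q f m N + T d p q g m N.
Proof.
  intros Hp Hf Hg. unfold T. rewrite <- Rmult_plus_distr_l.
  apply Rmult_le_compat_l; [left; apply W_pos|]. apply mink; auto.
Qed.

Lemma term_comb d p q x u v a b m N : 1 <= p -> 0 <= a -> 0 <= b ->
  (forall k, Rabs (x k) <= a * Rabs (u k) + b * Rabs (v k)) ->
  morrey_term d p q x m N <= a * morrey_term d p q u m N + b * morrey_term d p q v m N.
Proof.
  intros Hp Ha Hb H. rewrite !term_T.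
  apply Rle_trans with (T d p q (fun k => a * Rabs (u (to_Zd d k)) + b * Rabs (v (to_Zd d k))) m N).
  - apply T_mono; auto. intro k; split; [apply Rabs_pos|apply H].
  - rewrite <- (T_scal d p q _ a), <- (T_scal d p q _ b) by (auto; intro; apply Rabs_pos).
    apply T_add; auto; intro k; apply Rmult_le_pos; auto; apply Rabs_pos.
Qed.

Lemma morrey_set_ne d p q x : exists r, morrey_set d p q x r.
Proof. exists (morrey_term d p q x (to_Zd d []) 0). exists (to_Zd d []), 0%nat. reflexivity. Qed.

Lemma norm_lub d p q x : in_morrey d p q x -> is_lub (morrey_set d p q x) (morrey_norm d p q x).
Proof.
  intros [M HM]. unfold morrey_norm, Rsup. apply epsilon_spec.
  destruct (completeness (morrey_set d p q x)) as [s Hs].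
  - exists M. intros r [m [N ->]]. apply HM.
  - apply morrey_set_ne.
  - exists s; exact Hs.
Qed.

Lemma norm_ub d p q x m N : in_morrey d p q x -> morrey_term d p q x m N <= morrey_norm d p q x.
Proof. intro H. apply (proj1 (norm_lub d p q x H)). exists m, N; reflexivity. Qed.

Lemma norm_least d p q x M : (forall m N, morrey_term d p q x m N <= M) -> morrey_norm d p q x <= M.
Proof.
  intro H. assert (Hx : in_morrey d p q x) by (exists M; exact H).
  apply (proj2 (norm_lub d p q x Hx)). intros r [m [N ->]]. apply H.
Qed.

Lemma norm_nonneg d p q x : in_morrey d p q x -> 0 <= morrey_norm d p q x.
Proof. intro H. eapply Rle_trans; [|apply (norm_ub d p q x (to_Zd d []) 0 H)]. rewrite term_T; apply T_nonneg. Qed.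

Lemma norm_comb d p q x u v a b : 1 <= p -> 0 <= a -> 0 <= b ->
  in_morrey d p q u -> in_morrey d p q v ->
  (forall k, Rabs (x k) <= a * Rabs (u k) + b * Rabs (v k)) ->
  in_morrey d p q x /\ morrey_norm d p q x <= a * morrey_norm d p q u + b * morrey_norm d p q v.
Proof.
  intros Hp Ha Hb Hu Hv H.
  assert (Hx : forall m N, morrey_term d p q x m N <= a * morrey_norm d p q u + b * morrey_norm d p q v).
  { intros m N. eapply Rle_trans; [apply (term_comb d p q x u v a b m N Hp Ha Hb H)|].
    pose proof (norm_ub d p q u m N Hu); pose proof (norm_ub d p q v m N Hv). nra. }
  split; [exists (a * morrey_norm d p q u + b * morrey_norm d p q v); exact Hx|].
  apply norm_least; exact Hx.
Qed.

Lemma cube_0 l : cube l 0 = [l].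
Proof.
  induction l as [|a l IH]; [reflexivity|]. simpl. rewrite IH. simpl. f_equal. f_equal. lia.
Qed.

Lemma pad_id d l : length l = d -> pad d l = l.
Proof. revert l; induction d as [|d IH]; intros [|a l] H; simpl in *; try discriminate; auto.
  f_equal. apply IH. lia. Qed.

Lemma to_Zd_proj d (k : Zd d) : to_Zd d (proj1_sig k) = k.
Proof.
  destruct k as [l Hl]. unfold to_Zd. simpl.
  apply eq_exist_uncurried. exists (pad_id d l Hl). apply Eqdep_dec.UIP_dec, Nat.eq_dec.
Qed.

Lemma term_center d p q x k : 0 < p -> morrey_term d p q x k 0 = Rabs (x k).
Proof.
  intro Hp. unfold morrey_term. rewrite cube_0. simpl.
  rewrite Nat.pow_1_l. simpl INR. unfold Rpower at 1. rewrite ln_1, Rmult_0_r, exp_0, Rmult_1_l.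
  rewrite Rplus_0_r, to_Zd_proj. apply rpow_inv_p; [apply Rabs_pos|exact Hp].
Qed.

Lemma norm_point d p q x k : 0 < p -> in_morrey d p q x -> Rabs (x k) <= morrey_norm d p q x.
Proof. intros Hp H. rewrite <- (term_center d p q x k Hp). apply norm_ub, H. Qed.

Lemma norm_pos d p q x : 0 < p -> in_morrey d p q x -> x <> fzero -> 0 < morrey_norm d p q x.
Proof.
  intros Hp H Hx. destruct (classic (exists k, x k <> 0)) as [[k Hk]|Hn].
  - eapply Rlt_le_trans; [|apply (norm_point d p q x k Hp H)]. apply Rabs_pos_lt, Hk.
  - exfalso. apply Hx. apply functional_extensionality. intro k. unfold fzero.
    apply NNPP. intro Hk. apply Hn. exists k. exact Hk.
Qed.
Lemma div_le_const a c b : 0 < c -> a <= b * c -> a / c <= b.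
Proof. intros Hc H. replace b with ((b*c)/c) by (field; lra). unfold Rdiv. apply Rmult_le_compat_r; [left; apply Rinv_0_lt_compat; lra|exact H]. Qed.

Lemma abs_comb a s c t : 0 <= a -> c <= 0 -> Rabs (a*s + c*t) <= a * Rabs s + (-c) * Rabs t.
Proof. intros Ha Hc. eapply Rle_trans; [apply Rabs_triang|]. rewrite !Rabs_mult, (Rabs_right a), (Rabs_left1 c) by lra. lra. Qed.

Lemma abs_comb2 a s c t : 0 <= a -> 0 <= c -> Rabs (a*s + c*t) <= a * Rabs s + c * Rabs t.
Proof. intros Ha Hc. eapply Rle_trans; [apply Rabs_triang|]. rewrite !Rabs_mult, (Rabs_right a), (Rabs_right c) by lra. lra. Qed.

Lemma arith_dw X Y D E : 0 < Y <= X -> 0 < D -> 0 <= E -> E <= /X*D + (/Y - /X)*Y -> X <= D + Y -> (X+Y)/D*E <= 4.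
Proof.
  intros HXY HD HE H1 H2.
  assert (E*X <= 2*D).
  { apply Rle_trans with ((/X*D + (/Y - /X)*Y)*X); [apply Rmult_le_compat_r; lra|].
    replace ((/X*D + (/Y - /X)*Y)*X) with (D + X - Y) by (field; lra). lra. }
  replace ((X+Y)/D*E) with (((X+Y)*E)/D) by (field; lra).
  apply div_le_const; [lra|]. nra.
Qed.

Lemma fsub_neq {d} (x y : Zd d -> R) : x <> y -> fsub x y <> fzero.
Proof. intros H Hs. apply H, functional_extensionality. intro k. pose proof (equal_f Hs k). unfold fsub, fzero in H0. lra. Qed.

Section UB.
Variables (d : nat) (p q : R).
Hypothesis Hp : 1 <= p.

Lemma tri x y : in_morrey d p q x -> in_morrey d p q y ->
  (in_morrey d p q (fadd x y) /\ morrey_norm d p q (fadd x y) <= morrey_norm d p q x + morrey_norm d p q y) /\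
  (in_morrey d p q (fsub x y) /\ morrey_norm d p q (fsub x y) <= morrey_norm d p q x + morrey_norm d p q y).
Proof.
  intros Hx Hy. split.
  - destruct (norm_comb d p q (fadd x y) x y 1 1 Hp ltac:(lra) ltac:(lra) Hx Hy) as [H1 H2].
    { intro k; unfold fadd. rewrite !Rmult_1_l. apply Rabs_triang. } split; [exact H1|lra].
  - destruct (norm_comb d p q (fsub x y) x y 1 1 Hp ltac:(lra) ltac:(lra) Hx Hy) as [H1 H2].
    { intro k; unfold fsub. rewrite !Rmult_1_l. unfold Rminus; eapply Rle_trans; [apply Rabs_triang|]; rewrite Rabs_Ropp; lra. } split; [exact H1|lra].
Qed.

Lemma NJ_ub r : NJ_set d p q r -> r <= 2.
Proof.
  intros [x [y [Hx [Hy [Hx0 [Hy0 ->]]]]]].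
  pose proof (norm_pos d p q x ltac:(lra) Hx Hx0). pose proof (norm_pos d p q y ltac:(lra) Hy Hy0).
  destruct (tri x y Hx Hy) as [[Ha1 Ha2] [Hb1 Hb2]].
  pose proof (norm_nonneg d p q _ Ha1). pose proof (norm_nonneg d p q _ Hb1).
  set (X := morrey_norm d p q x) in *. set (Y := morrey_norm d p q y) in *.
  set (A := morrey_norm d p q (fadd x y)) in *. set (B := morrey_norm d p q (fsub x y)) in *.
  assert (A*A <= (X+Y)*(X+Y)) by (apply Rmult_le_compat; lra).
  assert (B*B <= (X+Y)*(X+Y)) by (apply Rmult_le_compat; lra).
  pose proof (Rle_0_sqr (X-Y)). unfold Rsqr in *. clear Hx0 Hy0.
  apply div_le_const; [nra|]. simpl. nra.
Qed.

Lemma J_ub r : J_set d p q r -> r <= 2.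
Proof.
  intros [x [y [Hx [Hy [Hx1 [Hy1 ->]]]]]].
  destruct (tri x y Hx Hy) as [[Ha1 Ha2] _]. eapply Rle_trans; [apply Rmin_l|]. lra.
Qed.

Lemma DW_ub r : DW_set d p q r -> r <= 4.
Proof.
  intros [x [y [Hx [Hy [Hx0 [Hy0 [Hxy ->]]]]]]].
  pose proof (norm_pos d p q x ltac:(lra) Hx Hx0) as HX. pose proof (norm_pos d p q y ltac:(lra) Hy Hy0) as HY.
  destruct (tri x y Hx Hy) as [_ [HD1 _]].
  pose proof (norm_pos d p q _ ltac:(lra) HD1 (fsub_neq x y Hxy)) as HD.
  clear Hx0 Hy0 Hxy.
  set (X := morrey_norm d p q x) in *. set (Y := morrey_norm d p q y) in *.
  set (D := morrey_norm d p q (fsub x y)) in *.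
  destruct (Rle_or_lt Y X) as [HYX|HXY].
  - destruct (norm_comb d p q (fsub (fscal (/X) x) (fscal (/Y) y)) (fsub x y) y (/X) (/Y - /X) Hp) as [Hz1 Hz2];
      auto.
    + left; apply Rinv_0_lt_compat; lra.
    + assert (/X <= /Y) by (apply Rinv_le_contravar; lra). lra.
    + intro k. unfold fsub, fscal.
      replace (/X * x k - /Y * y k) with (/X * (x k - y k) + (/X - /Y) * y k) by ring.
      replace (/Y - /X) with (- (/X - /Y)) by ring. apply abs_comb; [left; apply Rinv_0_lt_compat; lra|].
      assert (/X <= /Y) by (apply Rinv_le_contravar; lra). lra.
    + destruct (norm_comb d p q x (fsub x y) y 1 1 Hp ltac:(lra) ltac:(lra) HD1 Hy) as [_ H3].
      { intro k; unfold fsub. rewrite !Rmult_1_l. replace (x k) with ((x k - y k) + y k) at 1 by ring. apply Rabs_triang. }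
      fold X Y D in Hz2, H3. apply arith_dw; try lra. apply norm_nonneg, Hz1.
  - destruct (norm_comb d p q (fsub (fscal (/X) x) (fscal (/Y) y)) (fsub x y) x (/Y) (/X - /Y) Hp) as [Hz1 Hz2];
      auto.
    + left; apply Rinv_0_lt_compat; lra.
    + assert (/Y <= /X) by (apply Rinv_le_contravar; lra). lra.
    + intro k. unfold fsub, fscal.
      replace (/X * x k - /Y * y k) with (/Y * (x k - y k) + (/X - /Y) * x k) by ring.
      apply abs_comb2; [left; apply Rinv_0_lt_compat; lra|].
      assert (/Y <= /X) by (apply Rinv_le_contravar; lra). lra.
    + destruct (norm_comb d p q y (fsub x y) x 1 1 Hp ltac:(lra) ltac:(lra) HD1 Hx) as [_ H3].
      { intro k; unfold fsub. rewrite !Rmult_1_l. replace (y k) with (-(x k - y k) + x k) at 1 by ring.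
        eapply Rle_trans; [apply Rabs_triang|]. rewrite Rabs_Ropp; lra. }
      fold X Y D in Hz2, H3. rewrite Rplus_comm. apply arith_dw; try lra. apply norm_nonneg, Hz1.
Qed.
End UB.
Lemma NoDup_map_inj {A B} (f : A -> B) l : (forall x y, f x = f y -> x = y) -> NoDup l -> NoDup (map f l).
Proof.
  intros Hf Hl; induction Hl as [|a l Ha Hl IH]; simpl; constructor; auto.
  intro H. apply in_map_iff in H. destruct H as [x [Hx Hxl]]. apply Hf in Hx. subst; auto.
Qed.

Lemma NoDup_flat_map' {A B} (g : A -> list B) l : NoDup l -> (forall j, NoDup (g j)) ->
  (forall j1 j2 y, In y (g j1) -> In y (g j2) -> j1 = j2) -> NoDup (flat_map g l).
Proof.
  intros Hl Hg Hd; induction Hl as [|a l Ha Hl IH]; simpl; [constructor|].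
  apply NoDup_app; auto. intros y Hy Hy2. apply in_flat_map in Hy2. destruct Hy2 as [j [Hj Hyj]].
  pose proof (Hd _ _ _ Hy Hyj). subst; auto.
Qed.

Lemma cube_in m N k : In k (cube m N) ->
  length k = length m /\ Forall2 (fun a b => (b - Z.of_nat N <= a <= b + Z.of_nat N)%Z) k m.
Proof.
  revert k; induction m as [|c m IH]; intros k Hk; simpl in Hk.
  - destruct Hk as [<-|[]]. split; [reflexivity|constructor].
  - apply in_flat_map in Hk. destruct Hk as [j [Hj Hk]]. apply in_map_iff in Hk. destruct Hk as [k' [<- Hk']].
    apply in_map_iff in Hj. destruct Hj as [i [<- Hi]]. apply in_seq in Hi.
    destruct (IH k' Hk') as [H1 H2]. split; [simpl; lia|]. constructor; [lia|exact H2].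
Qed.

Lemma cube_nodup m N : NoDup (cube m N).
Proof.
  induction m as [|c m IH]; simpl; [constructor; [intros []|constructor]|].
  apply NoDup_flat_map'.
  - apply NoDup_map_inj; [intros x y H; lia|apply seq_NoDup].
  - intro j. apply NoDup_map_inj; [intros x y H; injection H; auto|exact IH].
  - intros j1 j2 y H1 H2. apply in_map_iff in H1, H2. destruct H1 as [a [<- _]]. destruct H2 as [b [Hb _]].
    injection Hb; auto.
Qed.
Lemma exp_le' x y : x <= y -> exp x <= exp y.
Proof. intros [H|H]; [left; apply exp_increasing, H|subst; lra]. Qed.
Lemma ln_le' x y : 0 < x -> x <= y -> ln x <= ln y.
Proof. intros Hx [H|H]; [left; apply ln_increasing; auto|subst; lra]. Qed.

Lemma F2_head {A B} (R : A -> B -> Prop) a l b l' : Forall2 R (a::l) (b::l') -> R a b.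
Proof. intro H; inversion H; auto. Qed.

Section Two.
Variables (d' : nat) (p q : R) (L : nat).
Hypothesis Hp : 1 <= p.
Hypothesis Hpq : p < q.
Hypothesis HL : (1 <= L)%nat.
Hypothesis Hsep : Rpower (INR (2*L+1)) (1/q - 1/p) * Rpower 2 (1/p) <= 1.

Let d := S d'.
Definition la : list Z := repeat 0%Z d.
Definition lb : list Z := (2 * Z.of_nat L)%Z :: repeat 0%Z d'.
Definition G (a b : R) (l : list Z) : R :=
  if list_eq_dec Z.eq_dec l la then a else if list_eq_dec Z.eq_dec l lb then b else 0.
Definition two (a b : R) : Zd d -> R := fun z => G a b (proj1_sig z).

Lemma la_lb : la <> lb.
Proof. unfold la, lb, d. intro H. apply (f_equal (hd 0%Z)) in H. cbn [hd repeat] in H. lia. Qed.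
Lemma la_len : length la = d. Proof. apply repeat_length. Qed.
Lemma lb_len : length lb = d. Proof. unfold lb, d; simpl; rewrite repeat_length; reflexivity. Qed.

Lemma G_la a b : G a b la = a.
Proof. unfold G. destruct (list_eq_dec Z.eq_dec la la); congruence. Qed.
Lemma G_lb a b : G a b lb = b.
Proof. unfold G. destruct (list_eq_dec Z.eq_dec lb la) as [H|H]; [exfalso; apply la_lb; auto|].
  destruct (list_eq_dec Z.eq_dec lb lb); congruence. Qed.
Lemma two_la a b : two a b (to_Zd d la) = a.
Proof. unfold two, to_Zd; cbn [proj1_sig]. rewrite pad_id by apply la_len. apply G_la. Qed.
Lemma two_lb a b : two a b (to_Zd d lb) = b.
Proof. unfold two, to_Zd; cbn [proj1_sig]. rewrite pad_id by apply lb_len. apply G_lb. Qed.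

Lemma sum_two (F : list Z -> R) c : NoDup c -> (forall k, k <> la -> k <> lb -> F k = 0) ->
  sumL F c = (if in_dec (list_eq_dec Z.eq_dec) la c then F la else 0)
           + (if in_dec (list_eq_dec Z.eq_dec) lb c then F lb else 0).
Proof.
  intros Hc HF. induction Hc as [|k c' Hk Hc' IH]; [unfold sumL; simpl; ring|].
  unfold sumL in *; simpl. rewrite IH.
  destruct (list_eq_dec Z.eq_dec k la) as [->|Hka].
  - destruct (list_eq_dec Z.eq_dec la la) as [E0|C1]; [|congruence].
    destruct (in_dec (list_eq_dec Z.eq_dec) la c') as [C4|E5]; [contradiction|].
    destruct (list_eq_dec Z.eq_dec la lb) as [C6|E7]; [exfalso; apply la_lb; auto|].
    destruct (in_dec (list_eq_dec Z.eq_dec) lb c'); simpl; ring.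
  - destruct (list_eq_dec Z.eq_dec k lb) as [->|Hkb].
    + destruct (list_eq_dec Z.eq_dec lb lb) as [E2|C3]; [|congruence].
      destruct (in_dec (list_eq_dec Z.eq_dec) lb c') as [C8|E9]; [contradiction|].
      destruct (list_eq_dec Z.eq_dec la lb) as [C10|E11]; [exfalso; apply la_lb; auto|].
      destruct (list_eq_dec Z.eq_dec lb la) as [C12|E13]; [exfalso; apply la_lb; auto|].
      destruct (in_dec (list_eq_dec Z.eq_dec) la c'); simpl; ring.
    + rewrite (HF k Hka Hkb).
      destruct (list_eq_dec Z.eq_dec la k) as [C14|E15]; [congruence|].
      destruct (list_eq_dec Z.eq_dec lb k) as [C16|E17]; [congruence|].
      destruct (in_dec (list_eq_dec Z.eq_dec) la c'); destruct (in_dec (list_eq_dec Z.eq_dec) lb c'); simpl; ring.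
Qed.

Lemma W_le1 N : W d p q N <= 1.
Proof.
  unfold W, Rpower. apply Rle_trans with (exp 0); [|rewrite exp_0; lra]. apply exp_le'.
  assert (1 <= INR ((2*N+1)^d)).
  { replace 1 with (INR 1) by reflexivity. apply le_INR. pose proof (Nat.pow_le_mono_l 1 (2*N+1) d). rewrite Nat.pow_1_l in H. lia. }
  assert (0 <= ln (INR ((2*N+1)^d))) by (rewrite <- ln_1; apply ln_le'; lra).
  assert (1/q - 1/p < 0).
  { unfold Rdiv; rewrite !Rmult_1_l. assert (/q < /p) by (apply Rinv_lt_contravar; nra). lra. }
  nra.
Qed.

Lemma W_leL N : (L <= N)%nat -> W d p q N <= Rpower (INR (2*L+1)) (1/q - 1/p).
Proof.
  intro HN. unfold W, Rpower. apply exp_le'.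
  assert (INR (2*L+1) <= INR ((2*N+1)^d)).
  { apply le_INR. assert (2*N+1 <= (2*N+1)^d)%nat.
    { unfold d. rewrite Nat.pow_succ_r'. pose proof (Nat.pow_le_mono_l 1 (2*N+1) d' ltac:(lia)) as H.
      rewrite Nat.pow_1_l in H. set (X := ((2*N+1)^d')%nat) in *. nia. }
    lia. }
  assert (0 < INR (2*L+1)) by (apply lt_0_INR; lia).
  assert (ln (INR (2*L+1)) <= ln (INR ((2*N+1)^d))) by (apply ln_le'; lra).
  assert (1/q - 1/p < 0).
  { unfold Rdiv; rewrite !Rmult_1_l. assert (/q < /p) by (apply Rinv_lt_contravar; nra). lra. }
  nra.
Qed.

Lemma term_two a b m N : morrey_term d p q (two a b) m N <= Rmax (Rabs a) (Rabs b).
Proof.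
  set (M := Rmax (Rabs a) (Rabs b)).
  assert (HM : 0 <= M) by (eapply Rle_trans; [apply Rabs_pos|apply Rmax_l]).
  unfold morrey_term.
  fold (sumL (fun k => rpow (Rabs (two a b (to_Zd d k))) p) (cube (proj1_sig m) N)).
  rewrite (sumL_ext_in _ (fun k => rpow (Rabs (G a b k)) p)).
  2:{ intros k Hk. apply cube_in in Hk. destruct m as [lm Hlm]; simpl in *.
      unfold two, to_Zd; cbn [proj1_sig]. rewrite pad_id by lia. reflexivity. }
  rewrite sum_two; [|apply cube_nodup|].
  2:{ intros k H1 H2. unfold G. destruct (list_eq_dec Z.eq_dec k la); [contradiction|].
      destruct (list_eq_dec Z.eq_dec k lb); [contradiction|]. rewrite Rabs_R0; apply rpow_zero. }
  rewrite G_la, G_lb. fold (W d p q N).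
  assert (Hp0 : 0 < 1/p) by (apply Rdiv_lt_0_compat; lra).
  pose proof (W_le1 N) as HW1. pose proof (W_pos d p q N) as HW0.
  assert (Ha : Rabs a <= M) by apply Rmax_l. assert (Hb : Rabs b <= M) by apply Rmax_r.
  destruct (in_dec (list_eq_dec Z.eq_dec) la (cube (proj1_sig m) N)) as [Ia|Ia];
  destruct (in_dec (list_eq_dec Z.eq_dec) lb (cube (proj1_sig m) N)) as [Ib|Ib].
  -
    assert (HLN : (L <= N)%nat).
    { destruct m as [lm Hlm]; simpl in *. destruct lm as [|c lm]; [simpl in Hlm; unfold d in Hlm; discriminate|].
      apply cube_in in Ia. apply cube_in in Ib. destruct Ia as [_ Ia]. destruct Ib as [_ Ib].
      unfold la, d in Ia. cbn [repeat] in Ia. apply F2_head in Ia. unfold lb in Ib. apply F2_head in Ib. lia. }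
    pose proof (W_leL N HLN).
    assert (Hs : rpow (rpow (Rabs a) p + rpow (Rabs b) p) (1/p) <= Rpower 2 (1/p) * M).
    { apply Rle_trans with (rpow (2 * rpow M p) (1/p)).
      - apply rpow_le; [|lra]. split; [pose proof (rpow_nonneg (Rabs a) p); pose proof (rpow_nonneg (Rabs b) p); lra|].
        pose proof (rpow_le (Rabs a) M p ltac:(split; [apply Rabs_pos|exact Ha]) ltac:(lra)).
        pose proof (rpow_le (Rabs b) M p ltac:(split; [apply Rabs_pos|exact Hb]) ltac:(lra)). lra.
      - rewrite rpow_mul by (try lra; apply rpow_nonneg). rewrite rpow_inv_p by lra.
        rewrite rpow_pos by lra. lra. }
    assert (0 < Rpower 2 (1/p)) by (unfold Rpower; apply exp_pos).
    apply Rle_trans with (W d p q N * (Rpower 2 (1/p) * M)); [apply Rmult_le_compat_l; lra|].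
    apply Rle_trans with (Rpower (INR (2 * L + 1)) (1 / q - 1 / p) * Rpower 2 (1/p) * M).
    + rewrite <- Rmult_assoc. apply Rmult_le_compat_r; [lra|]. apply Rmult_le_compat_r; lra.
    + pose proof (Rmult_le_compat_r M _ _ HM Hsep). lra.
  - rewrite Rplus_0_r, rpow_inv_p by (try apply Rabs_pos; lra). pose proof (Rabs_pos a). nra.
  - rewrite Rplus_0_l, rpow_inv_p by (try apply Rabs_pos; lra). pose proof (Rabs_pos b). nra.
  - rewrite Rplus_0_l, rpow_zero. lra.
Qed.

Lemma norm_two a b : in_morrey d p q (two a b) /\ morrey_norm d p q (two a b) = Rmax (Rabs a) (Rabs b).
Proof.
  assert (H : in_morrey d p q (two a b)) by (exists (Rmax (Rabs a) (Rabs b)); apply term_two).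
  split; [exact H|]. apply Rle_antisym.
  - apply norm_least. apply term_two.
  - apply Rmax_lub.
    + rewrite <- (two_la a b) at 1. apply norm_point; [lra|exact H].
    + rewrite <- (two_lb a b) at 1. apply norm_point; [lra|exact H].
Qed.

Lemma two_add a b a' b' : fadd (two a b) (two a' b') = two (a+a') (b+b').
Proof. apply functional_extensionality; intro z; unfold fadd, two, G.
  destruct (list_eq_dec Z.eq_dec (proj1_sig z) la); [|destruct (list_eq_dec Z.eq_dec (proj1_sig z) lb)]; ring. Qed.
Lemma two_sub a b a' b' : fsub (two a b) (two a' b') = two (a-a') (b-b').
Proof. apply functional_extensionality; intro z; unfold fsub, two, G.
  destruct (list_eq_dec Z.eq_dec (proj1_sig z) la); [|destruct (list_eq_dec Z.eq_dec (proj1_sig z) lb)]; ring. Qed.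
Lemma two_scal c a b : fscal c (two a b) = two (c*a) (c*b).
Proof. apply functional_extensionality; intro z; unfold fscal, two, G.
  destruct (list_eq_dec Z.eq_dec (proj1_sig z) la); [|destruct (list_eq_dec Z.eq_dec (proj1_sig z) lb)]; ring. Qed.
Lemma two_neq0 a b : a <> 0 -> two a b <> fzero.
Proof. intros Ha H. apply Ha. rewrite <- (two_la a b). rewrite H. reflexivity. Qed.
Lemma two_neq a b a' b' : a <> a' -> two a b <> two a' b'.
Proof. intros Ha H. apply Ha. rewrite <- (two_la a b), <- (two_la a' b'). rewrite H. reflexivity. Qed.

End Two.
Lemma exists_L p q : 1 <= p -> p < q -> exists L, (1 <= L)%nat /\
  Rpower (INR (2*L+1)) (1/q - 1/p) * Rpower 2 (1/p) <= 1.
Proof.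
  intros Hp Hpq. set (e := 1/q - 1/p).
  assert (He : e < 0) by (unfold e, Rdiv; rewrite !Rmult_1_l; assert (/q < /p) by (apply Rinv_lt_contravar; nra); lra).
  set (K := (ln 2 / p) / (-e)).
  destruct (archimed (exp K)) as [H1 _]. set (z := up (exp K)) in *.
  pose proof (exp_pos K).
  assert (Hz : (0 <= z)%Z) by (apply le_IZR; lra).
  exists (S (Z.to_nat z)). split; [lia|].
  assert (HX : exp K < INR (2 * S (Z.to_nat z) + 1)).
  { apply Rlt_le_trans with (IZR z); [exact H1|]. rewrite <- (Z2Nat.id z Hz) at 1. rewrite <- INR_IZR_INZ.
    apply le_INR. lia. }
  set (X := INR (2 * S (Z.to_nat z) + 1)) in *.
  assert (HlX : K < ln X) by (rewrite <- (ln_exp K); apply ln_increasing; auto).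
  unfold Rpower. rewrite <- exp_plus. apply Rle_trans with (exp 0); [|rewrite exp_0; lra]. apply exp_le'.
  assert (HK : K * (-e) = ln 2 / p) by (unfold K; field; lra).
  assert (e * ln X <= e * K) by nra.
  replace (1/p * ln 2) with (ln 2 / p) by (field; lra). nra.
Qed.

Lemma rmax_abs_l a b : 0 <= a -> -a <= b <= a -> Rmax (Rabs a) (Rabs b) = a.
Proof. intros Ha Hb. rewrite (Rabs_right a) by lra. apply Rmax_left. apply Rabs_le; lra. Qed.
Lemma rmax_abs_r a b : 0 <= b -> -b <= a <= b -> Rmax (Rabs a) (Rabs b) = b.
Proof. intros Ha Hb. rewrite (Rabs_right b) by lra. apply Rmax_right. apply Rabs_le; lra. Qed.

Theorem theorem2 (d : nat) (p q : R) :
  (1 <= d)%nat -> 1 <= p -> p < q ->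
  is_lub (NJ_set d p q) 2 /\ is_lub (J_set d p q) 2 /\ is_lub (DW_set d p q) 4.
Proof.
  intros Hd Hp Hpq. destruct d as [|d']; [lia|].
  destruct (exists_L p q Hp Hpq) as [L [HL Hsep]].
  pose proof (norm_two d' p q L Hp Hpq HL Hsep) as NT.
  destruct (NT 1 1) as [Hx Ex]. destruct (NT 1 (-1)) as [Hy Ey].
  assert (E1 : Rmax (Rabs 1) (Rabs 1) = 1) by (apply rmax_abs_l; lra).
  assert (E2 : Rmax (Rabs 1) (Rabs (-1)) = 1) by (apply rmax_abs_l; lra).
  assert (E3 : Rmax (Rabs (1+1)) (Rabs (1 + -1)) = 2) by (rewrite rmax_abs_l; lra).
  assert (E4 : Rmax (Rabs (1-1)) (Rabs (1 - -1)) = 2) by (rewrite rmax_abs_r; lra).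
  split; [|split].
  - split; [intros r Hr; apply (NJ_ub _ p q Hp r Hr)|].
    intros b Hb. apply Hb. exists (two d' L 1 1), (two d' L 1 (-1)).
    split; [exact Hx|]. split; [exact Hy|]. split; [apply two_neq0; lra|]. split; [apply two_neq0; lra|].
    rewrite two_add, two_sub, Ex, Ey, (proj2 (NT _ _)), (proj2 (NT _ _)), E1, E2, E3, E4. field.
  - split; [intros r Hr; apply (J_ub _ p q Hp r Hr)|].
    intros b Hb. apply Hb. exists (two d' L 1 1), (two d' L 1 (-1)).
    split; [exact Hx|]. split; [exact Hy|]. split; [rewrite Ex; exact E1|]. split; [rewrite Ey; exact E2|].
    rewrite two_add, two_sub, (proj2 (NT _ _)), (proj2 (NT _ _)), E3, E4. unfold Rmin.
    destruct (Rle_dec 2 2); lra.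
  - split; [intros r Hr; apply (DW_ub _ p q Hp r Hr)|].
    intros b Hb. destruct (Rle_or_lt 4 b) as [H|Hb4]; [exact H|exfalso].
    set (s := Rmin (1/2) ((4-b)/4)).
    assert (Hs1 : 0 < s) by (unfold s; apply Rmin_glb_lt; lra).
    assert (Hs2 : s <= 1/2) by apply Rmin_l.
    assert (Hs3 : s <= (4-b)/4) by apply Rmin_r.
    destruct (NT (1-s) (1+s)) as [Hy' Ey'].
    assert (Ey'' : morrey_norm (S d') p q (two d' L (1-s) (1+s)) = 1+s) by (rewrite Ey'; apply rmax_abs_r; lra).
    assert (Ex' : morrey_norm (S d') p q (two d' L 1 1) = 1) by (rewrite Ex; exact E1).
    set (x := two d' L 1 1) in *. set (y := two d' L (1-s) (1+s)) in *.
    assert (HD : DW_set (S d') p q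
      ((morrey_norm (S d') p q x + morrey_norm (S d') p q y) / morrey_norm (S d') p q (fsub x y) *
        morrey_norm (S d') p q (fsub (fscal (/ morrey_norm (S d') p q x) x)
                                (fscal (/ morrey_norm (S d') p q y) y)))).
    { exists x, y. split; [exact Hx|]. split; [exact Hy'|]. split; [apply two_neq0; lra|].
      split; [apply two_neq0; lra|]. split; [apply two_neq; lra|]. reflexivity. }
    specialize (Hb _ HD). rewrite Ex', Ey'' in Hb. unfold x, y in Hb.
    rewrite two_sub, two_scal, two_scal, two_sub, (proj2 (NT _ _)), (proj2 (NT _ _)) in Hb.
    rewrite (rmax_abs_l (1 - (1-s)) (1 - (1+s))) in Hb by lra.
    assert (Ea : / 1 * 1 - / (1 + s) * (1 - s) = 2*s/(1+s)) by (field; lra).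
    assert (Eb : / 1 * 1 - / (1 + s) * (1 + s) = 0) by (field; lra).
    rewrite Ea, Eb in Hb.
    assert (Hpos : 0 <= 2*s/(1+s)) by (apply Rle_mult_inv_pos; lra).
    rewrite (rmax_abs_l (2*s/(1+s)) 0) in Hb by lra.
    replace ((1 + (1 + s)) / (1 - (1 - s)) * (2 * s / (1 + s))) with (2*(2+s)/(1+s)) in Hb by (field; lra).
    assert (Hdiff : 2*(2+s)/(1+s) - (4 - 2*s) = 2*s*s/(1+s)) by (field; lra).
    assert (0 <= 2*s*s/(1+s)) by (apply Rle_mult_inv_pos; nra).
    lra.
Qed.
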